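(* Let $q\ge 2$ and $n\ge 1$ be integers. Then: (i) $I_q(n,2)=q^n$ and $I_q(n,2n)=q$. (ii) For every even integer $d$ with $4\le d\le 2n-2$, one has $I_q(n,d)\le \frac12\left(q^{\,n-\frac d2+1}+q^{\,n-\frac d2}\right)$. (iii) For every even integer $d$ with $2q\le d\le 2n-2$, one has $I_q(n,d)\le q^{\,n-\frac d2}$.
   Context: $[q]=\{1,\dots,q\}$ and $[q]^n$ is the set of words of length $n$ over $[q]$; a $q$-ary code of length $n$ is a subset of $[q]^n$ with at least two elements. For $\mathbf u,\mathbf v\in[q]^n$, $\ell_{\rm LCS}(\mathbf u,\mathbf v)$ is the length of a longest common subsequence of $\mathbf u$ and $\mathbf v$, and the insdel distance $d_I(\mathbf u,\mathbf v)$ is the minimum number of insertions and deletions of symbols transforming $\mathbf u$ into $\mathbf v$; equivalently $d_I(\mathbf u,\mathbf v)=2n-2\ell_{\rm LCS}(\mathbf u,\mathbf v)$. The insdel distance $d_I(\mathcal C)$ of a code $\mathcal C$ is the minimum of $d_I(\mathbf u,\mathbf v)$ over distinct $\mathbf u,\mathbf v\in\mathcal C$. $I_q(n,d)$ denotes the largest size $M$ of a code $\mathcal C\subseteq[q]^n$ with $d_I(\mathcal C)\ge d$. *)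

(* Defs.v *)
From mathcomp Require Import all_boot all_order.
Set Implicit Arguments. Unset Strict Implicit. Unset Printing Implicit Defensive.

(* Words of length n over [q] are modelled as n.-tuple 'I_q
   (the alphabet 'I_q = {0,...,q-1} is a relabelling of [q] = {1,...,q}). *)

Definition lcs_len (q n : nat) (u v : n.-tuple 'I_q) : nat :=
  \max_(k < n.+1 | [exists s : k.-tuple 'I_q,
                      subseq (tval s) (tval u) && subseq (tval s) (tval v)]) k.

Definition insdel (q n : nat) (u v : n.-tuple 'I_q) : nat :=
  2 * n - 2 * lcs_len u v.

Definition is_code_min_dist (q n d : nat) (C : {set n.-tuple 'I_q}) : bool :=
  (1 < #|C|) &&
  [forall u in C, forall v in C, (u != v) ==> (d <= insdel u v)].

Definition Iq (q n d : nat) : nat :=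
  \max_(C : {set n.-tuple 'I_q} | is_code_min_dist d C) #|C|.

(* Main.v *)
Require Import Defs.
From mathcomp Require Import all_boot all_order zify.
Set Implicit Arguments. Unset Strict Implicit. Unset Printing Implicit Defensive.

Lemma mem_nth_take (T : eqType) (x0 : T) (s : seq T) i k :
  i < k -> i < size s -> nth x0 s i \in take k s.
Proof.
move=> h1 h2; rewrite -(nth_take x0 h1); apply: mem_nth.
rewrite size_take_min leq_min h1 h2 //.
Qed.

Lemma two_sub (T : eqType) (x0 : T) (s : seq T) i j :
  i < j -> j < size s -> subseq [:: nth x0 s i; nth x0 s j] s.
Proof.
move=> hij hjs.
rewrite -[X in subseq _ X](cat_take_drop i.+1 s).
apply: (@cat_subseq _ [:: _] [:: _]); rewrite sub1seq.
  by apply: mem_nth_take => //; apply: ltn_trans hjs.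
have -> : nth x0 s j = nth x0 (drop i.+1 s) (j - i.+1) by rewrite nth_drop subnKC.
apply: mem_nth; rewrite size_drop; lia.
Qed.

Lemma sub2 (T : eqType) (x0 : T) (s : seq T) k i j :
  k <= i -> i < j -> j < size s ->
  subseq (take k s ++ [:: nth x0 s i; nth x0 s j]) s.
Proof.
move=> hki hij hjs.
rewrite -[X in subseq _ X](cat_take_drop k s).
apply: cat_subseq; first exact: subseq_refl.
have -> : nth x0 s i = nth x0 (drop k s) (i - k) by rewrite nth_drop subnKC.
have -> : nth x0 s j = nth x0 (drop k s) (j - k).
  by rewrite nth_drop subnKC //; lia.
apply: two_sub; rewrite ?size_drop; lia.
Qed.

Lemma dcount (T U : finType) (C : {set T}) (R : T -> U -> bool) k :
  (forall u v p, u \in C -> v \in C -> R u p -> R v p -> u = v) ->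
  (forall u, u \in C -> k <= \sum_p (R u p : nat)) ->
  k * #|C| <= #|U|.
Proof.
move=> Hd Hk.
have -> : k * #|C| = \sum_(u in C) k by rewrite sum_nat_const mulnC.
apply: (@leq_trans (\sum_(u in C) \sum_p (R u p : nat))); first exact: leq_sum.
rewrite exchange_big /=.
apply: (@leq_trans (\sum_(p : U) 1)); last by rewrite sum1_card.
apply: leq_sum => p _.
case: (pickP [pred u | (u \in C) && R u p]) => [u0 /andP[hu0 hR0] | hnone].
  rewrite (bigD1 u0) //= big1 ?addn0 ?leq_b1 // => v /andP[hv hvu].
  apply/eqP; rewrite eqb0; apply/negP => hRv; move/eqP: hvu; apply.
  exact: Hd hv hu0 hRv hR0.
by rewrite big1 // => v hv; have := hnone v; rewrite /= hv /= => ->.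
Qed.

Lemma sum_ge1 (U : finType) (f : U -> bool) p : f p -> 1 <= \sum_p (f p : nat).
Proof. by move=> h; rewrite (bigD1 p) //= h. Qed.

Lemma sum_ge2 (U : finType) (f : U -> bool) p1 p2 :
  p1 != p2 -> f p1 -> f p2 -> 2 <= \sum_p (f p : nat).
Proof.
move=> hne h1 h2; rewrite (bigD1 p1) //= (bigD1 p2) /=; last by rewrite eq_sym hne.
by rewrite h1 h2.
Qed.

Lemma lcs_le q n (u v : n.-tuple 'I_q) : lcs_len u v <= n.
Proof. by rewrite /lcs_len; apply/bigmax_leqP => i _; rewrite -ltnS; apply: ltn_ord. Qed.

Lemma lcs_ge q n (u v : n.-tuple 'I_q) (s : seq 'I_q) :
  subseq s u -> subseq s v -> size s <= lcs_len u v.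
Proof.
move=> hu hv.
have hk : size s < n.+1 by rewrite ltnS -(size_tuple u); apply: size_subseq.
rewrite /lcs_len.
have -> : size s = Ordinal hk by [].
apply: leq_bigmax_cond; apply/existsP.
exists (@Tuple (Ordinal hk) _ s (eqxx (size s))) => /=.
by rewrite hu hv.
Qed.

Lemma lcs_lt q n (u v : n.-tuple 'I_q) : u != v -> lcs_len u v < n.
Proof.
case: n u v => [|n] u v huv.
  by move: huv; rewrite (tuple0 u) (tuple0 v) eqxx.
rewrite /lcs_len ltnS; apply/bigmax_leqP => i /existsP[s /andP[h1 h2]].
rewrite leqNgt; apply/negP => hlt.
have hi : (i : nat) = n.+1 by have := ltn_ord i; lia.
case: s h1 h2 => s hs /= h1 h2.
have [_ E1] := size_subseq_leqif h1.
have [_ E2] := size_subseq_leqif h2.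
move: E1 E2; rewrite !size_tuple (eqP hs) hi eqxx => /esym/eqP E1 /esym/eqP E2.
move/eqP: huv; apply; apply: val_inj; exact: (etrans (esym E1) E2).
Qed.

Lemma lcs_zero q n (u v : n.-tuple 'I_q) :
  (forall x, x \in u -> x \in v -> False) -> lcs_len u v = 0.
Proof.
move=> H; apply/eqP; rewrite -leqn0; apply/bigmax_leqP => i /existsP[s /andP[h1 h2]].
case: s h1 h2 => [[|x s'] hs] /= h1 h2.
  by rewrite -(eqP hs).
exfalso; apply: (H x).
  exact: (mem_subseq h1 (mem_head x s')).
exact: (mem_subseq h2 (mem_head x s')).
Qed.

Lemma code_common q n d (C : {set n.-tuple 'I_q}) u v (s : seq 'I_q) :
  is_code_min_dist d C -> u \in C -> v \in C -> subseq s u -> subseq s v ->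
  2 * n < 2 * size s + d -> u = v.
Proof.
move=> /andP[_ /forall_inP H] hu hv hsu hsv hlt.
case: (eqVneq u v) => // huv; exfalso.
have := H u hu => /forall_inP /(_ v hv) /implyP /(_ huv).
rewrite /insdel.
have := lcs_ge hsu hsv; have := lcs_le u v; lia.
Qed.

Lemma part1a q n (hq : 2 <= q) (hn : 1 <= n) : Iq q n 2 = q ^ n.
Proof.
apply/eqP; rewrite eqn_leq; apply/andP; split.
  apply/bigmax_leqP => C _; apply: leq_trans (max_card (mem C)) _.
  by rewrite card_tuple card_ord.
have hqn : q <= q ^ n.
  case: n hn => // n _; rewrite expnS -{1}(muln1 q) leq_mul2l expn_gt0; lia.
have := (@leq_bigmax_cond _ (fun C : {set n.-tuple 'I_q} => is_code_min_dist 2 C)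
          (fun C => #|C|) [set: n.-tuple 'I_q]).
rewrite cardsT card_tuple card_ord; apply.
apply/andP; split.
  by rewrite cardsT card_tuple card_ord; lia.
apply/forall_inP => u _; apply/forall_inP => v _; apply/implyP => huv.
rewrite /insdel; have := lcs_lt huv; lia.
Qed.

Lemma part1b q n (hq : 2 <= q) (hn : 1 <= n) : Iq q n (2 * n) = q.
Proof.
apply/eqP; rewrite eqn_leq; apply/andP; split.
  apply/bigmax_leqP => C hC.
  pose i0 : 'I_n := Ordinal hn.
  rewrite -[#|C|]mul1n -[X in _ <= X]card_ord.
  apply: (@dcount _ _ C (fun u p => tnth u i0 == p)).
    move=> u v p hu hv /eqP hup /eqP hvp.
    apply: (code_common (s := [:: p]) hC hu hv).
    - by rewrite sub1seq -hup mem_tnth.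
    - by rewrite sub1seq -hvp mem_tnth.
    - rewrite /=; lia.
  by move=> u _; apply: (sum_ge1 (p := tnth u i0)).
pose f := fun c : 'I_q => [tuple of nseq n c].
have finj : injective f.
  move=> c c' /(congr1 (fun t : n.-tuple 'I_q => c \in tval t)).
  rewrite /= !mem_nseq eqxx hn /= => /esym/eqP; done.
have := (@leq_bigmax_cond _ (fun C : {set n.-tuple 'I_q} => is_code_min_dist (2 * n) C)
          (fun C => #|C|) (f @: setT)).
rewrite card_imset // cardsT card_ord; apply.
apply/andP; split.
  by rewrite card_imset // cardsT card_ord.
apply/forall_inP => u /imsetP[c _ ->]; apply/forall_inP => v /imsetP[c' _ ->].
apply/implyP => hne.
rewrite /insdel lcs_zero ?muln0 ?subn0 // => x.
rewrite /= !mem_nseq => /andP[_ /eqP ->] /andP[_ /eqP hcc].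
by move: hne; rewrite hcc eqxx.
Qed.

Definition R2 q n r (u : n.-tuple 'I_q)
  (p : ((r.-tuple 'I_q * 'I_q) * 'I_q + (r.-tuple 'I_q * 'I_q))%type) : bool :=
  match p with
  | inl (s, x, y) => subseq (tval s ++ [:: x; y]) u
  | inr (s, c) => subseq (tval s ++ [:: c; c]) u
  end.

Lemma part2 q n d (hq : 2 <= q) (hn : 1 <= n) :
  ~~ odd d -> 4 <= d -> d <= 2 * n - 2 ->
  2 * Iq q n d <= q ^ (n - d./2 + 1) + q ^ (n - d./2).
Proof.
move=> hodd hd4 hdn.
have hd : d = 2 * d./2 by have := odd_double_half d; rewrite (negbTE hodd) add0n -mul2n.
set t := d./2 in hd *.
set r := n - t - 1.
have e1 : n - t + 1 = r.+2 by rewrite /r; lia.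
have e2 : n - t = r.+1 by rewrite /r; lia.
rewrite e1 e2.
rewrite /Iq; apply: (big_ind (fun x => 2 * x <= q ^ r.+2 + q ^ r.+1)) => //.
  move=> x y hx hy; lia.
move=> C hC.
have -> : q ^ r.+2 + q ^ r.+1 = #|{: ((r.-tuple 'I_q * 'I_q) * 'I_q + (r.-tuple 'I_q * 'I_q))%type}|.
  by rewrite card_sum !card_prod card_tuple card_ord !expnSr.
apply: (@dcount _ _ C (@R2 q n r)).
  move=> u v [[[s x] y]|[s c]] hu hv /= h1 h2.
    apply: (code_common hC hu hv h1 h2); rewrite size_cat size_tuple /=; rewrite /r; lia.
  apply: (code_common hC hu hv h1 h2); rewrite size_cat size_tuple /=; rewrite /r; lia.
move=> u hu.
have hq0 : 0 < q by lia.
pose x0 : 'I_q := Ordinal hq0.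
have hs : size (take r u) == r by rewrite size_take_min size_tuple /r; apply/eqP; lia.
pose P := Tuple hs.
pose x := nth x0 u r; pose y := nth x0 u r.+1; pose z := nth x0 u r.+2.
have hsz : r.+2 < size u by rewrite size_tuple /r; lia.
have S01 : subseq (take r u ++ [:: x; y]) u by apply: sub2 => //; exact: ltn_trans _ hsz.
have S02 : subseq (take r u ++ [:: x; z]) u by apply: sub2 => //; apply: ltnW.
have S12 : subseq (take r u ++ [:: y; z]) u by apply: sub2 => //.
case: (eqVneq x y) => exy.
  apply: (@sum_ge2 _ _ (inl (P, x, y)) (inr (P, x))) => //=.
  by rewrite {2}exy.
case: (eqVneq x z) => exz.
  apply: (@sum_ge2 _ _ (inl (P, x, z)) (inr (P, x))) => //=.
  by rewrite {2}exz.
case: (eqVneq y z) => eyz.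
  apply: (@sum_ge2 _ _ (inl (P, y, z)) (inr (P, y))) => //=.
  by rewrite {2}eyz.
apply: (@sum_ge2 _ _ (inl (P, x, y)) (inl (P, x, z))) => //=.
apply/negP => /eqP [] hyz; by move: eyz; rewrite hyz eqxx.
Qed.

Lemma part3 q n d (hq : 2 <= q) (hn : 1 <= n) :
  ~~ odd d -> 2 * q <= d -> d <= 2 * n - 2 ->
  Iq q n d <= q ^ (n - d./2).
Proof.
move=> hodd hdq hdn.
have hd : d = 2 * d./2 by have := odd_double_half d; rewrite (negbTE hodd) add0n -mul2n.
set t := d./2 in hd *.
set r := n - t - 1.
have e2 : n - t = r.+1 by rewrite /r; lia.
rewrite e2.
apply/bigmax_leqP => C hC.
have -> : q ^ r.+1 = #|{: (r.-tuple 'I_q * 'I_q)%type}|.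
  by rewrite card_prod card_tuple card_ord !expnSr.
rewrite -[#|C|]mul1n.
apply: (@dcount _ _ C (fun u p => subseq (tval p.1 ++ [:: p.2; p.2]) u)).
  move=> u v [s c] hu hv /= h1 h2.
  apply: (code_common hC hu hv h1 h2); rewrite size_cat size_tuple /=; rewrite /r; lia.
move=> u hu.
have hq0 : 0 < q by lia.
pose x0 : 'I_q := Ordinal hq0.
have hs : size (take r u) == r by rewrite size_take_min size_tuple /r; apply/eqP; lia.
pose P := Tuple hs.
pose f := fun i : 'I_t.+1 => nth x0 u (r + i).
have : ~~ injectiveb f.
  apply/negP => /injectiveP hinj; have := @leq_card _ _ f hinj; rewrite !card_ord; lia.
move=> /injectivePn [i [j hij hfij]].
have key : forall a b : 'I_t.+1, a < b -> f a = f b -> 1 <= \sum_(p : (r.-tuple 'I_q * 'I_q)%type)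
    (subseq (tval p.1 ++ [:: p.2; p.2]) u : nat).
  move=> a b hab hfab.
  apply: (@sum_ge1 _ (fun p : (r.-tuple 'I_q * 'I_q)%type => subseq (tval p.1 ++ [:: p.2; p.2]) u) (P, f a)) => /=.
  rewrite {2}hfab; apply: sub2; rewrite ?size_tuple; try lia.
  have := ltn_ord b; rewrite /r; lia.
case: (ltngtP i j) => h.
- exact: (key i j h hfij).
- exact: (key j i h (esym hfij)).
- by move: hij; rewrite (val_inj h) eqxx.
Qed.

Theorem theorem3p6 (q n : nat) (hq : 2 <= q) (hn : 1 <= n) :
  (Iq q n 2 = q ^ n /\ Iq q n (2 * n) = q) /\
  (forall d : nat, ~~ odd d -> 4 <= d -> d <= 2 * n - 2 ->
     2 * Iq q n d <= q ^ (n - d./2 + 1) + q ^ (n - d./2)) /\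
  (forall d : nat, ~~ odd d -> 2 * q <= d -> d <= 2 * n - 2 ->
     Iq q n d <= q ^ (n - d./2)).
Proof.
split; first by split; [exact: part1a | exact: part1b].
split => d; [exact: part2 | exact: part3].
Qed.
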